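(* Let $d > 0$ and let $$S_d^* \in \arg\max_{S \subseteq V:\ |S| \le k,\ \mathrm{div}(S) \ge d} g(S)$$ (assume this feasible family is nonempty). Let $T$ be an output of $\mathrm{GreedyIndependentSet}(V,g,d',k)$ with $0 \le d' < d/2$. Then $g(T) \ge \tfrac{1}{2}\, g(S_d^* )$.
   Context: Let $V$ be a finite set of $n$ points in a metric space with metric $\mathrm{dist}$, and let $d_{\max} = \max_{u,v \in V}\mathrm{dist}(u,v)$. For $u \in V$ and $S \subseteq V$ let $\mathrm{dist}(u,S) = \min_{v \in S}\mathrm{dist}(u,v)$, with $\mathrm{dist}(u,\emptyset) = \infty$. The max-min diversity is $\mathrm{div}(S) = \min_{u,v \in S,\, u \ne v}\mathrm{dist}(u,v)$ if $|S| \ge 2$, and $\mathrm{div}(S) = d_{\max}$ if $|S| \le 1$. Let $g : 2^V \to \mathbb{R}_{\ge 0}$ be a nonnegative monotone submodular function and $k \ge 1$ an integer. $\mathrm{GreedyIndependentSet}(V,g,d,k)$: initialize $S \gets \emptyset$; for $i = 1,\dots,k$: let $C = \{v \in V\setminus S : \mathrm{dist}(v,S) \ge d\}$; if $C = \emptyset$ return $S$; otherwise pick $t \in \arg\max_{v \in C} \big(g(S\cup\{v\}) - g(S)\big)$ (ties broken arbitrarily) and set $S \gets S \cup\{t\}$. After the loop, return $S$. *)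

(* Defs.v *)
(* The finite point set V is modelled as a finType T
   (the metric space restricted to V); dist : T -> T -> R is its metric. *)
From HB Require Import structures.
From mathcomp Require Import all_boot all_order all_algebra.
Set Implicit Arguments. Unset Strict Implicit. Unset Printing Implicit Defensive.
Import Order.TTheory GRing.Theory Num.Theory.
Local Open Scope ring_scope.

Section Defs.
Variables (R : realFieldType) (T : finType).

Definition is_metric (dist : T -> T -> R) : Prop :=
  [/\ forall x y, dist x y = 0 <-> x = y,
      forall x y, dist x y = dist y x &
      forall x y z, dist x z <= dist x y + dist y z].

Definition nonneg_fun (g : {set T} -> R) : Prop := forall S, 0 <= g S.
Definition monotone_fun (g : {set T} -> R) : Prop :=
  forall A B : {set T}, A \subset B -> g A <= g B.
Definition submodular (g : {set T} -> R) : Prop :=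
  forall A B : {set T}, g (A :|: B) + g (A :&: B) <= g A + g B.

(* d_max = max_{u,v in V} dist(u,v) (distances are >= 0, so 0 is a neutral start) *)
Definition dmax (dist : T -> T -> R) : R :=
  \big[Num.max/0]_(u : T) \big[Num.max/0]_(v : T) dist u v.

(* div(S) = min over distinct pairs if |S| >= 2, d_max otherwise.
   All distances are <= d_max, so d_max is a neutral start for the min. *)
Definition div (dist : T -> T -> R) (S : {set T}) : R :=
  if (2 <= #|S|)%N then
    \big[Num.min/dmax dist]_(u in S) \big[Num.min/dmax dist]_(v in S | v != u) dist u v
  else dmax dist.

(* dist(v,S) >= d, with the convention dist(v, emptyset) = +infinity:
   i.e. every u in S satisfies dist(v,u) >= d. *)
Definition dist_set_ge (dist : T -> T -> R) (v : T) (S : {set T}) (d : R) : bool :=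
  [forall u in S, d <= dist v u].

Definition cand (dist : T -> T -> R) (d : R) (S : {set T}) : {set T} :=
  [set v | (v \notin S) && dist_set_ge dist v S d].

(* greedy_run dist g d S m Out : running the remaining m iterations of
   GreedyIndependentSet from current set S can return Out (ties arbitrary). *)
Inductive greedy_run (dist : T -> T -> R) (g : {set T} -> R) (d : R) :
    {set T} -> nat -> {set T} -> Prop :=
  | greedy_done S : greedy_run dist g d S 0 S
  | greedy_empty S m : cand dist d S = set0 -> greedy_run dist g d S m.+1 S
  | greedy_pick S m t Out :
      t \in cand dist d S ->
      (forall v, v \in cand dist d S -> g (v |: S) - g S <= g (t |: S) - g S) ->
      greedy_run dist g d (t |: S) m Out ->
      greedy_run dist g d S m.+1 Out.

Definition greedy_output dist g d k (Out : {set T}) : Prop :=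
  greedy_run dist g d set0 k Out.

End Defs.

(* Main.v *)
Require Import Defs.
From HB Require Import structures.
From mathcomp Require Import all_boot all_order all_algebra.
From mathcomp Require Import ring lra.
Import Order.TTheory GRing.Theory Num.Theory.
Local Open Scope ring_scope.

Section Helpers.
Variables (R : realFieldType) (V : finType) (dist : V -> V -> R) (g : {set V} -> R).

Lemma run_sub (d : R) S m Out : greedy_run dist g d S m Out -> S \subset Out.
Proof.
elim=> // S0 m0 t Out0 _ _ _ IH; apply: subset_trans IH; exact: subsetUr.
Qed.

Lemma dimret (S B : {set V}) a : submodular g -> S \subset B -> a \notin B ->
  g (a |: B) - g B <= g (a |: S) - g S.
Proof.
move=> sub sSB aB.
have := sub (a |: S) B.
have -> : (a |: S) :|: B = a |: B.
  apply/setP=> x; rewrite !inE; case: (x == a) => //=.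
  case xS: (x \in S) => //=; by rewrite (subsetP sSB).
have -> : (a |: S) :&: B = S.
  apply/setP=> x; rewrite !inE; case: eqP => [->|_] /=.
    rewrite (negbTE aB) /= ?andbF; apply/esym/negbTE; apply: contra aB; exact: (subsetP sSB).
  case xS: (x \in S) => //=; by rewrite (subsetP sSB).
move=> H; lra.
Qed.

Lemma subadd (B : {set V}) n : submodular g -> forall A : {set V}, #|A| = n ->
  g (B :|: A) - g B <= \sum_(a in A) (g (a |: B) - g B).
Proof.
move=> sub; elim: n => [|n IH] A cA.
  move/eqP: cA; rewrite cards_eq0 => /eqP ->; rewrite big_set0 setU0; lra.
have : (0 < #|A|)%N by rewrite cA.
rewrite card_gt0 => /set0Pn [a aA].
rewrite (big_setD1 a aA) /=.
have cA' : #|A :\ a| = n by move: cA; rewrite (cardsD1 a A) aA => -[].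
have := IH _ cA'.
have := sub (a |: B) (B :|: A :\ a).
have -> : (a |: B) :|: (B :|: A :\ a) = B :|: A.
  apply/setP=> x; rewrite !inE; case: eqP => [->|_] /=; first by rewrite aA orbT.
  by case: (x \in B).
have -> : (a |: B) :&: (B :|: A :\ a) = B.
  apply/setP=> x; rewrite !inE; case: eqP => [->|_] /=; first by rewrite orbF.
  by case: (x \in B).
move=> H1 H2; lra.
Qed.

Lemma div_le (S : {set V}) a b : a \in S -> b \in S -> a != b ->
  div dist S <= dist a b.
Proof.
move=> aS bS ab; rewrite /div.
have -> : (2 <= #|S|)%N by apply/card_gt1P; exists a, b.
rewrite (bigD1 a) //= ge_min; apply/orP; left.
by rewrite (bigD1 b) /= ?bS 1?eq_sym ?ab // ge_min lexx.
Qed.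

Lemma inv d d' S m Out : is_metric dist -> monotone_fun g -> submodular g ->
  d' < d / 2 -> greedy_run dist g d' S m Out ->
  forall A : {set V}, (forall a b, a \in A -> b \in A -> a != b -> d <= dist a b) ->
  (forall a, a \in A -> a \notin Out) ->
  (forall a, a \in A -> a \in cand dist d' S) -> (#|A| <= m)%N ->
  \sum_(a in A) (g (a |: Out) - g Out) <= g Out - g S.
Proof.
move=> [_ dsym dtri] mon sub hd run.
elim: run => {S m Out}.
- move=> S A _ _ _; rewrite leqn0 cards_eq0 => /eqP ->; rewrite big_set0; lra.
- move=> S m hc A _ _ hA _.
  have -> : A = set0.
    apply/setP=> x; rewrite inE; apply/negbTE/negP => /hA; by rewrite hc inE.
  rewrite big_set0; lra.
- move=> S m t Out tc tmax run IH A sep dis cA cardA.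
  have sOut : t |: S \subset Out by apply: run_sub run.
  have tOut : t \in Out by rewrite (subsetP sOut) // setU11.
  have gSO : g S <= g Out by apply: mon; apply: subset_trans sOut; exact: subsetUr.
  have gtO : g (t |: S) <= g Out by apply: mon.
  case: (set_0Vmem A) => [->|[a0 a0A]]; first by rewrite big_set0; lra.
  pose P := [exists a in A, dist a t < d'].
  have [astar [asA asP]] : exists astar, astar \in A /\
     (forall a, a \in A -> a != astar -> d' <= dist a t).
    case: (boolP P) => [/exists_inP [a1 a1A a1t]|nP].
      exists a1; split=> // a aA aa1; rewrite leNgt; apply/negP=> at'.
      have := sep _ _ aA a1A aa1.
      have := dtri a t a1; rewrite (dsym t a1) => h1 h2; lra.
    exists a0; split=> // a aA _; rewrite leNgt; apply/negP=> at'.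
    by move/negP: nP; apply; apply/exists_inP; exists a.
  rewrite (big_setD1 astar asA) /=.
  have H1 := IH (A :\ astar).
  have H2 : \sum_(i in A :\ astar) (g (i |: Out) - g Out) <= g Out - g (t |: S).
    apply: H1.
    - by move=> a b; rewrite !inE => /andP[_ aA] /andP[_ bA]; apply: sep.
    - by move=> a; rewrite !inE => /andP[_ aA]; apply: dis.
    - move=> a; rewrite !inE => /andP[aas aA].
      have := cA a aA; rewrite /cand inE => /andP[aS /forall_inP aF].
      apply/andP; split.
        rewrite negb_or aS andbT; apply/eqP=> at1.
        by move: (dis a aA); rewrite at1 tOut.
      rewrite /dist_set_ge.
      apply/forall_inP=> u /setU1P [->|uS]; last exact: aF.
      exact: asP.
    - move: cardA; rewrite (cardsD1 astar A) asA add1n ltnS //.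
  have H3 : g (astar |: Out) - g Out <= g (astar |: S) - g S.
    apply: dimret => //; [apply: subset_trans sOut; exact: subsetUr | exact: dis].
  have H4 := tmax astar (cA astar asA).
  lra.
Qed.

End Helpers.

Theorem lemma3p2 (R : realFieldType) (V : finType) (dist : V -> V -> R)
    (g : {set V} -> R) (k : nat) (d d' : R) (Sstar Out : {set V}) :
  is_metric dist -> nonneg_fun g -> monotone_fun g -> submodular g ->
  (1 <= k)%N -> 0 < d ->
  (#|Sstar| <= k)%N -> d <= div dist Sstar ->
  (forall S : {set V}, (#|S| <= k)%N -> d <= div dist S -> g S <= g Sstar) ->
  0 <= d' -> d' < d / 2 ->
  greedy_output dist g d' k Out ->
  g Sstar / 2 <= g Out.
Proof.
move=> met nn mon sub _ _ cS dS _ _ hd run.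
pose A := Sstar :\: Out.
have H1 := @inv R V dist g d d' set0 k Out met mon sub hd run A.
have H2 : \sum_(a in A) (g (a |: Out) - g Out) <= g Out - g set0.
  apply: H1.
  - move=> a b; rewrite !inE => /andP[_ aS] /andP[_ bS] ab.
    apply: le_trans dS _; exact: div_le.
  - by move=> a; rewrite !inE => /andP[].
  - move=> a _; rewrite /cand inE in_set0 /=; apply/forall_inP=> u; by rewrite in_set0.
  - apply: leq_trans cS; apply: subset_leq_card; exact: subsetDl.
have H3 := @subadd R V g Out _ sub A (erefl #|A|).
have H4 : g Sstar <= g (Out :|: A).
  apply: mon; apply/subsetP=> x xS; rewrite !inE xS; by case: (x \in Out).
have H5 := nn set0; clear H1.
move: H2 H3 H4 H5.
move: (\sum_(a in A) (g (a |: Out) - g Out)) (g Sstar) (g Out) (g (Out :|: A)) (g set0) => x y z w v.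
move=> *; lra.
Qed.
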